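(* Let $m\ge 3$ and $n$ be integers, and let $k$ be an integer with $1\le k\le n^2-3n+2$. Write $k=(n-1)q+r$ with integers $q\ge 0$ and $1\le r\le n-1$. Let $M_1=(\mu_{ij})$ be the $n\times n$ $0/1$ matrix with $\mu_{1,n-1}=\mu_{1,n}=1$, $\mu_{i,i-1}=1$ for $2\le i\le n$, and all other entries $0$. Let $\mathbb{A}_k=(a^{(k)}_{i_1\ldots i_m})$ be the order $m$, dimension $n$ nonnegative tensor with: (a) $a^{(k)}_{ij\ldots j}=\mu_{ij}$ for all $i,j\in[n]$; (b) $a^{(k)}_{ii_2\ldots i_m}=1$ whenever $i\in[n]\setminus\{r-q,r-q+1,\ldots,r,r+1\}\pmod n$ and the set of distinct values among $i_2,\ldots,i_m$ equals $\{r-q-1,r\}\pmod n$; (c) all other entries equal $0$. Then (i) $\gamma_j(\mathbb{A}_k)=k+n-j$ for $j=1,\ldots,n-1$ and $\gamma_n(\mathbb{A}_k)=k+n$; (ii) $\gamma(\mathbb{A}_k)=k+n$.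
   Context: Tensors of order $m$ and dimension $n$ have entries indexed by $[n]^m$, $[n]=\{1,\ldots,n\}$. For an integer $a$, $|a|_n$ denotes the least positive integer congruent to $a$ modulo $n$, and for integers $a_1,\ldots,a_s$ the notation $\{a_1,\ldots,a_s\}\pmod n$ means the set $\{|a_1|_n,\ldots,|a_s|_n\}\subseteq[n]$. General product: for a tensor $\mathbb{A}$ of order $m\ge2$ and $\mathbb{B}$ of order $k\ge1$, both of dimension $n$, $\mathbb{A}\mathbb{B}$ is the tensor of order $(m-1)(k-1)+1$ with entries $(\mathbb{A}\mathbb{B})_{i\alpha_1\ldots\alpha_{m-1}}=\sum_{i_2,\ldots,i_m=1}^n a_{ii_2\ldots i_m}b_{i_2\alpha_1}\cdots b_{i_m\alpha_{m-1}}$ ($i\in[n]$, $\alpha_1,\ldots,\alpha_{m-1}\in[n]^{k-1}$); this product is associative, and $\mathbb{A}^k$ denotes the $k$-fold product. The majorization matrix $M(\mathbb{C})$ of a tensor $\mathbb{C}$ is the $n\times n$ matrix with $(M(\mathbb{C}))_{ij}=c_{ij\ldots j}$. For $j\in[n]$, a nonnegative tensor $\mathbb{A}$ is $j$-primitive if there is $k\ge1$ with $(M(\mathbb{A}^k))_{uj}>0$ for all $u\in[n]$; the least such $k$ is $\gamma_j(\mathbb{A})$. $\mathbb{A}$ is primitive if there is $r\ge1$ with $M(\mathbb{A}^r)>0$ entrywise, and the least such $r$ is the primitive degree $\gamma(\mathbb{A})$ (equivalently, the least $r$ with $T_{\mathbb{A}}^r(x)>0$ for all nonnegative nonzero $x$,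 where $T_{\mathbb{A}}(x)=(\mathbb{A}x)^{[1/(m-1)]}$). *)

(* Defs.v *)
From HB Require Import structures.
From mathcomp Require Import all_boot all_order all_algebra.
Set Implicit Arguments. Unset Strict Implicit. Unset Printing Implicit Defensive.
Import Order.TTheory GRing.Theory Num.Theory.
Local Open Scope ring_scope.

(* Indices: [n] = {1..n} is represented by 'I_n (0-based: index i <-> i+1).
   A tensor of dimension n is a function on index sequences; a tensor of order
   m is only ever evaluated on sequences of length m (the order is tracked
   separately). *)
Definition tensor (R : Type) (n : nat) := seq 'I_n -> R.

(* General product A B, A of order m, B of order d+1 (so each alpha_l has
   length d): (AB)_{i alpha_1 .. alpha_{m-1}} =
     sum_{i_2..i_m} a_{i i_2 .. i_m} b_{i_2 alpha_1} ... b_{i_m alpha_{m-1}}. *)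
Definition tmul (R : numDomainType) (n m d : nat) (A B : tensor R n) : tensor R n :=
  fun s => match s with
  | [::] => 0
  | i :: rest =>
      \sum_(t : (m.-1).-tuple 'I_n)
        A (i :: t) * \prod_(l < m.-1) B (tnth t l :: take d (drop (l * d) rest))
  end.

(* tpow m A p = A^(p+1), of order (m-1)^p + 1; A^(p+2) = A (A^(p+1)). *)
Fixpoint tpow (R : numDomainType) (n m : nat) (A : tensor R n) (p : nat) : tensor R n :=
  match p with
  | 0 => A
  | p'.+1 => tmul m ((m.-1) ^ p') A (tpow m A p')
  end.

Definition tens_pow (R : numDomainType) (n m : nat) (A : tensor R n) (k : nat) :=
  tpow m A k.-1.

Definition majo (R : numDomainType) (n ord : nat) (C : tensor R n) (i j : 'I_n) : R :=
  C (i :: nseq ord.-1 j).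

Definition majo_pow (R : numDomainType) (n m : nat) (A : tensor R n) (k : nat) :=
  majo ((m.-1) ^ k.-1 + 1) (tens_pow m A k).

Definition nonneg_tensor (R : numDomainType) (n : nat) (A : tensor R n) :=
  forall s, 0 <= A s.

Definition jprim_degree (R : numDomainType) (n m : nat) (A : tensor R n)
    (j : 'I_n) (g : nat) : Prop :=
  [/\ (1 <= g)%N,
      (forall u, 0 < majo_pow m A g u j) &
      (forall k, (1 <= k)%N -> (forall u, 0 < majo_pow m A k u j) -> (g <= k)%N)].

Definition prim_degree (R : numDomainType) (n m : nat) (A : tensor R n)
    (g : nat) : Prop :=
  [/\ (1 <= g)%N,
      (forall u j, 0 < majo_pow m A g u j) &
      (forall k, (1 <= k)%N -> (forall u j, 0 < majo_pow m A k u j) -> (g <= k)%N)].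

(* idx n a = |a|_n - 1, the 0-based index of the least positive integer
   congruent to a mod n. *)
Definition idx (n : nat) (a : int) : nat := `|((a - 1) %% n%:Z)%Z|%N.

Definition mu1 (n : nat) (i j : 'I_n) : bool :=
  ((val i == 0%N) && ((val j == n.-2) || (val j == n.-1)))
  || ((0 < val i)%N && ((val j).+1 == val i)).

Definition Atens (R : numDomainType) (n q r : nat) : tensor R n :=
  fun s => match s with
  | i :: ((j :: _) as t) =>
      if all (pred1 j) t then (mu1 i j)%:R
      else
        (( ~~ has (fun d => val i == idx n (r%:Z - q%:Z + d%:Z)) (iota 0 q.+2))
         && (perm_eq (undup (map val t)) (undup [:: idx n (r%:Z - q%:Z - 1); idx n r%:Z])))%:R
  | _ => 0
  end.

(* Main.v *)
Set Warnings "-notation-overridden,-ambiguous-paths,-deprecated".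
Require Import Defs.
From HB Require Import structures.
From mathcomp Require Import all_boot all_order all_algebra.
From mathcomp Require Import reals.
From mathcomp Require Import zify.
Set Implicit Arguments. Unset Strict Implicit. Unset Printing Implicit Defensive.
Import Order.TTheory GRing.Theory Num.Theory.
Local Open Scope ring_scope.

Lemma Atens_ge0 (R : numDomainType) n q r s : 0 <= @Atens R n q r s.
Proof. case: s => [|i [|j t]] //=; case: ifP => _; exact: ler0n. Qed.

Lemma tpow_ge0 (R : numDomainType) n m (A : tensor R n) :
  (forall s, 0 <= A s) -> forall p s, 0 <= tpow m A p s.
Proof.
move=> A0; elim=> [|p IH] s //=; rewrite /tmul; case: s => [|i rest] //.
apply: sumr_ge0 => t _; apply: mulr_ge0 => //; apply: prodr_ge0 => l _; exact: IH.
Qed.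

Lemma sum_gt0P (R : numDomainType) (I : finType) (F : I -> R) :
  (forall i, 0 <= F i) -> (0 < \sum_i F i) <-> exists i, 0 < F i.
Proof.
move=> h; rewrite lt0r sumr_ge0 // andbT psumr_neq0 //.
by split => [/hasP[i _ /= hi]|[i hi]]; [exists i | apply/hasP; exists i; rewrite ?mem_index_enum].
Qed.

Lemma mul_gt0_nn (R : numDomainType) (x y : R) : 0 <= x -> 0 <= y -> 0 < x * y -> 0 < x /\ 0 < y.
Proof.
move=> hx hy; rewrite lt0r mulf_eq0 negb_or => /andP[/andP[nx ny] _].
by rewrite !lt0r nx ny hx hy.
Qed.

Lemma prod_gt0_all (R : numDomainType) (I : finType) (F : I -> R) :
  (forall i, 0 <= F i) -> 0 < \prod_i F i -> forall i, 0 < F i.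
Proof.
move=> h0 hp i; rewrite lt0r h0 andbT; apply/negP => /eqP Fi0.
move: hp; rewrite lt0r => /andP[/negP hne _]; apply: hne.
by apply/prodf_eq0; exists i => //; rewrite Fi0.
Qed.

Lemma majo_pow1 (R : numDomainType) n m (A : tensor R n) u j :
  majo_pow m A 1 u j = A [:: u; j].
Proof. by []. Qed.

Lemma majo_powS (R : numDomainType) n m (A : tensor R n) p u j :
  majo_pow m A p.+2 u j = \sum_(t : (m.-1).-tuple 'I_n)
     A (u :: t) * \prod_(l < m.-1) majo_pow m A p.+1 (tnth t l) j.
Proof.
rewrite /majo_pow /majo /tens_pow /= !addn1 /= /tmul.
apply: eq_bigr => t _; congr (_ * _); apply: eq_bigr => l _.
rewrite drop_nseq take_nseq // expnSr.
have := ltn_ord l; move: (m.-1 ^ p)%N (m.-1) (nat_of_ord l) => X M L hl; nia.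
Qed.

Lemma majo_powS_pos (R : numDomainType) n m (A : tensor R n) p u j :
  (forall s, 0 <= A s) ->
  (0 < majo_pow m A p.+2 u j) <->
  exists t : (m.-1).-tuple 'I_n, 0 < A (u :: t) /\
     forall l, 0 < majo_pow m A p.+1 (tnth t l) j.
Proof.
move=> A0; have B0 : forall w, 0 <= majo_pow m A p.+1 w j.
  by move=> w; exact: tpow_ge0.
rewrite majo_powS sum_gt0P; last first.
  by move=> t; apply: mulr_ge0 => //; apply: prodr_ge0.
split => [[t ht]|[t [ht hl]]].
  have [h1 h2] := mul_gt0_nn (A0 _) (prodr_ge0 _ (fun l _ => B0 _)) ht.
  exists t; split => //; exact: prod_gt0_all h2.
exists t; apply: mulr_gt0 => //; apply: prodr_gt0 => l _; exact: hl.
Qed.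
Definition bad n q r (v : nat) : bool :=
  has (fun d => v == idx n (r%:Z - q%:Z + d%:Z)) (iota 0 q.+2).
Definition A0 n q r := idx n (r%:Z - q%:Z - 1).
Definition B0 n r := idx n r%:Z.

Definition Fs n q r (S : 'I_n -> bool) (u : 'I_n) : bool :=
  [exists w, S w && mu1 u w] ||
  [&& [exists w, S w && (val w == A0 n q r)],
      [exists w, S w && (val w == B0 n r)] & ~~ bad n q r (val u)].

Lemma Fstep (R : numDomainType) n q r m' (u : 'I_n) (S : 'I_n -> bool) :
  A0 n q r != B0 n r ->
  (exists t : (m'.+2).-tuple 'I_n, 0 < @Atens R n q r (u :: t) /\ forall l, S (tnth t l))
  <-> Fs q r S u.
Proof.
move=> hAB; split.
  move=> [t [ht hS]].
  have hS' : forall y, y \in (t : seq _) -> S y by move=> y /tnthP[l ->].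
  move: ht hS'; clear hS; case: t => [[|x s] sz]; first by [].
  rewrite (_ : Atens R q r (u :: x :: s) = (if all (pred1 x) (x :: s) then (mu1 u x)%:R
    else ((~~ bad n q r u) && perm_eq (undup (map val (x :: s)))
       (undup [:: A0 n q r; B0 n r]))%:R)); last by [].
  case: ifP => hall; rewrite ltr0n lt0b => ht hS'.
    by apply/orP; left; apply/existsP; exists x; rewrite hS' ?mem_head.
  move/andP: ht => [hb hp]; apply/orP; right; apply/and3P; split => //.
    have : A0 n q r \in undup [:: A0 n q r; B0 n r] by rewrite mem_undup mem_head.
    rewrite -(perm_mem hp) mem_undup => /mapP[y hy ->].
    by apply/existsP; exists y; rewrite hS' ?eqxx.
  have : B0 n r \in undup [:: A0 n q r; B0 n r] by rewrite mem_undup !inE eqxx orbT.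
  rewrite -(perm_mem hp) mem_undup => /mapP[y hy ->].
  by apply/existsP; exists y; rewrite hS' ?eqxx.
case/orP.
  move=> /existsP[w /andP[hw hm]]; exists (nseq_tuple m'.+2 w); split.
    by rewrite /Atens /= eqxx all_pred1_nseq /= ltr0n lt0b.
  by move=> l; rewrite tnth_nseq.
move=> /and3P[/existsP[wa /andP[hwa /eqP ea]] /existsP[wb /andP[hwb /eqP eb]] hbad].
have nab : (wb == wa) = false.
  by apply/negbTE; apply/negP => /eqP wab; move: hAB; rewrite -ea -eb wab eqxx.
exists (cons_tuple wa (nseq_tuple m'.+1 wb)); split.
  rewrite (_ : Atens R q r (u :: wa :: nseq m'.+1 wb) = ((~~ bad n q r u) &&
     perm_eq (undup (map val (wa :: nseq m'.+1 wb))) (undup [:: A0 n q r; B0 n r]))%:R); last first.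
    by rewrite /Atens /= nab /= andbF.
  rewrite ltr0n lt0b hbad.
  apply: uniq_perm; rewrite ?undup_uniq // => z.
  rewrite !mem_undup map_cons map_nseq !inE mem_nseq ea eb /=.
  by case: (z == A0 n q r); case: (z == B0 n r); rewrite /= ?andbF.
move=> l; have : tnth (cons_tuple wa (nseq_tuple m'.+1 wb)) l \in
   (cons_tuple wa (nseq_tuple m'.+1 wb) : seq _) by apply: mem_tnth.
rewrite /= inE => /orP[/eqP->//|hin]; have := all_pred1_nseq wb m'.+1.
by move/allP/(_ _ hin) => /eqP->.
Qed.

Lemma idx_char n (z : int) (x : nat) : (x < n)%N ->
  z = (x.+1)%:Z \/ z = (x.+1)%:Z - n%:Z -> idx n z = x.
Proof.
move=> hx; rewrite /idx => -[->|->].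
  rewrite (_ : x.+1%:Z - 1 = x%:Z); last by lia.
  by rewrite modz_small // ltz_nat hx andbT.
rewrite (_ : x.+1%:Z - n%:Z - 1 = x%:Z - n%:Z); last by lia.
rewrite -(modzDr (x%:Z - n%:Z)) (_ : x%:Z - n%:Z + n%:Z = x%:Z); last by lia.
by rewrite modz_small // ltz_nat hx andbT.
Qed.

Lemma B0_val n r : (1 <= r)%N -> (r < n)%N -> B0 n r = r.-1.
Proof. move=> h1 h2; apply: idx_char; [lia | left; lia]. Qed.

Lemma A0_val n q r : (1 <= r)%N -> (r < n)%N -> (q + 3 <= n)%N ->
  (A0 n q r < n)%N /\ ((A0 n q r + q + 2 = r)%N \/ (A0 n q r + q + 2 = n + r)%N).
Proof.
move=> h1 h2 h3; case: (leqP (q + 2) r) => hqr.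
  rewrite /A0 (@idx_char n _ (r - q - 2)); [lia|lia|left; lia].
rewrite /A0 (@idx_char n _ (n + r - q - 2)); [lia|lia|right; lia].
Qed.

Lemma bad_val n q r v : (1 <= r)%N -> (r < n)%N -> (q + 3 <= n)%N -> (v < n)%N ->
  bad n q r v = ((v <= r) && (r <= v + q + 1))%N || (n + r <= v + q + 1)%N.
Proof.
move=> h1 h2 h3 hv.
have key : forall d, (d < q.+2)%N -> idx n (r%:Z - q%:Z + d%:Z) =
   if (q.+1 <= r + d)%N then (r + d - q.+1)%N else (n + r + d - q.+1)%N.
  move=> d hd; case: ifP => h.
    apply: idx_char; [lia | left; lia].
  apply: idx_char; [lia | right; lia].
apply/hasP/idP.
  move=> [d]; rewrite mem_iota => /andP[_ hd] /eqP ->; rewrite key; last by lia.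
  case: ifP => h; apply/orP; lia.
case/orP => h.
  exists (v + q + 1 - r)%N; first by rewrite mem_iota; lia.
  rewrite key; last by lia.
  by rewrite ifT; [apply/eqP; lia | lia].
exists (v + q + 1 - n - r)%N; first by rewrite mem_iota; lia.
rewrite key; last by lia.
by rewrite ifF; [apply/eqP; lia | lia].
Qed.

Lemma ex_mu1 n (p : nat -> bool) (u : 'I_n) : (2 <= n)%N ->
  [exists w : 'I_n, p (val w) && mu1 u w] =
  ((0 < val u)%N && p (val u).-1) || ((val u == 0%N) && (p n.-2 || p n.-1)).
Proof.
move=> hn; apply/existsP/idP.
  move=> [w /andP[pw]]; rewrite /mu1 => /orP[/andP[u0 /orP[/eqP wv|/eqP wv]]|/andP[u0 /eqP wv]].
  - by rewrite u0 -wv pw orbT.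
  - by rewrite u0 -wv pw !orbT.
  - by rewrite u0 -wv /= pw.
case/orP => /andP[h1 h2].
  have hl : ((val u).-1 < n)%N by exact: (leq_ltn_trans (leq_pred _) (ltn_ord u)).
  exists (Ordinal hl); rewrite h2 /= /mu1 /= h1; apply/orP; right; apply/eqP; rewrite prednK //.
case/orP: h2 => h2.
  have hl : (n.-2 < n)%N by lia.
  by exists (Ordinal hl); rewrite h2 /= /mu1 /= h1 eqxx.
have hl : (n.-1 < n)%N by lia.
by exists (Ordinal hl); rewrite h2 /= /mu1 /= h1 eqxx orbT.
Qed.

Lemma ex_val n (p : nat -> bool) x : (x < n)%N ->
  [exists w : 'I_n, p (val w) && (val w == x)] = p x.
Proof.
move=> hx; apply/existsP/idP => [[w /andP[pw /eqP <-]] //|px].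
by exists (Ordinal hx); rewrite px eqxx.
Qed.

Lemma Fs_nat n q r (p : nat -> bool) (u : 'I_n) :
  (1 <= r)%N -> (r < n)%N -> (q + 3 <= n)%N ->
  Fs q r (fun w => p (val w)) u =
  [|| (0 < val u)%N && p (val u).-1, (val u == 0%N) && (p n.-2 || p n.-1)
    | [&& p (A0 n q r), p (B0 n r) & ~~ bad n q r (val u)]].
Proof.
move=> h1 h2 h3; have [hA _] := A0_val h1 h2 h3.
rewrite /Fs ex_mu1; last by lia.
rewrite !ex_val //; last by rewrite B0_val //; lia.
by rewrite orbA.
Qed.

Definition arcp n c e v : bool :=
  ((v <= e) && (e <= v + c + 1))%N || ((e < v) && (e + n <= v + c + 1))%N.

Lemma arc_step n q r c e (u : 'I_n) :
  (1 <= r)%N -> (r < n)%N -> (q + 3 <= n)%N -> (e <= n - 2)%N ->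
  (c < q \/ (c = q /\ e < r - 1))%N ->
  Fs q r (fun w => arcp n c e (val w)) u =
  (if e == n - 2 then arcp n c.+1 0 (val u) else arcp n c e.+1 (val u))%N.
Proof.
move=> h1 h2 h3 he hc; rewrite Fs_nat // bad_val // ?ltn_ord // B0_val //.
have [hA hA'] := A0_val h1 h2 h3.
have hv : (val u < n)%N := ltn_ord u.
move: (A0 n q r) hA hA' (val u) hv => a hA hA' v hv.
rewrite -?subn1 -?subn2.
apply/idP/idP.
  case/or3P => [/andP[hv0 hp]|/andP[hv0 hp]|/and3P[ha hb hbad]].
  - case: ifP => /eqP hE; move: hp; rewrite /arcp; lia.
  - case: ifP => /eqP hE; move: hp; rewrite /arcp; lia.
  - case: ifP => /eqP hE; move: ha hb hbad; rewrite /arcp; lia.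
case: (posnP v) => hv0.
  move=> H; apply/orP; right; apply/orP; left; move: H; case: ifP => /eqP hE; rewrite /arcp; lia.
move=> H; apply/orP; left; move: H; case: ifP => /eqP hE; rewrite /arcp; lia.
Qed.

Lemma arc_final n q r (u : 'I_n) :
  (1 <= r)%N -> (r < n)%N -> (q + 3 <= n)%N ->
  Fs q r (fun w => arcp n q r.-1 (val w)) u.
Proof.
move=> h1 h2 h3; rewrite Fs_nat // bad_val // ?ltn_ord // B0_val //.
have [hA hA'] := A0_val h1 h2 h3.
have hv : (val u < n)%N := ltn_ord u.
move: (A0 n q r) hA hA' (val u) hv => a hA hA' v hv.
rewrite -?subn1 -?subn2.
rewrite /arcp; case: (boolP (((v <= r) && (r <= v + q + 1)) || (n + r <= v + q + 1))%N) => hb.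
  case: (posnP v) => hv0; apply/or3P; [apply: Or32 | apply: Or31]; move: hb; lia.
by apply/or3P; apply: Or33; apply/and3P; split; [lia|lia|].
Qed.

Lemma arc_notfull n c e : (c + 2 < n)%N -> (e.+1 < n)%N -> arcp n c e e.+1 = false.
Proof. move=> h1 h2; rewrite /arcp; lia. Qed.

Lemma full_step n q r (u : 'I_n) :
  (1 <= r)%N -> (r < n)%N -> (q + 3 <= n)%N ->
  Fs q r (fun w => true) u.
Proof.
move=> h1 h2 h3; rewrite (@Fs_nat n q r (fun _ => true)) //.
by rewrite andbT /=; case: (\val u).
Qed.

Lemma Fs_ext n q r (S S' : 'I_n -> bool) : S =1 S' -> Fs q r S =1 Fs q r S'.
Proof.
move=> h u; rewrite /Fs.
have e1 : forall P : 'I_n -> bool, [exists w, S w && P w] = [exists w, S' w && P w].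
  by move=> P; apply: eq_existsb => w; rewrite h.
by rewrite !e1.
Qed.

Lemma iter_ext n q r t (S S' : 'I_n -> bool) : S =1 S' ->
  iter t (Fs q r) S =1 iter t (Fs q r) S'.
Proof. by move=> h; elim: t => [|t IH] //=; apply: Fs_ext. Qed.

Lemma iter_full n q r (S : 'I_n -> bool) t :
  (1 <= r)%N -> (r < n)%N -> (q + 3 <= n)%N ->
  (forall u, iter t (Fs q r) S u) -> forall d u, iter (d + t) (Fs q r) S u.
Proof.
move=> h1 h2 h3 H; elim=> [|d IH] u //=.
by rewrite (@Fs_ext _ _ _ _ (fun _ => true) IH u); exact: full_step.
Qed.

Lemma Fs_single n q r x (u : 'I_n) :
  (1 <= r)%N -> (r < n)%N -> (q + 3 <= n)%N -> (x < n)%N ->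
  Fs q r (fun w => val w == x) u =
  (if x == n - 2 then arcp n 0 0 (val u) else if x == n - 1 then val u == 0 else val u == x.+1)%N.
Proof.
move=> h1 h2 h3 hx.
rewrite (@Fs_nat n q r (fun v => v == x)) // B0_val //.
have [hA hA'] := A0_val h1 h2 h3.
have hv : (val u < n)%N := ltn_ord u.
move: (A0 n q r) hA hA' (val u) hv => a hA hA' v hv.
rewrite -?subn1 -?subn2 /arcp.
have -> : [&& a == x, r - 1 == x & ~~ bad n q r v]%N = false.
  by apply/negbTE; apply/negP => /and3P[/eqP ha /eqP hb _]; lia.
rewrite orbF.
by case: ifP => /eqP H1; [|case: ifP => /eqP H2]; lia.
Qed.

Lemma Fs_single_mu n q r (j u : 'I_n) :
  (1 <= r)%N -> (r < n)%N -> (q + 3 <= n)%N ->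
  Fs q r (fun w => val w == val j) u = mu1 u j.
Proof.
move=> h1 h2 h3; rewrite /Fs.
have -> : [exists w, (val w == val j) && mu1 u w] = mu1 u j.
  apply/existsP/idP => [[w /andP[/eqP/val_inj -> //]]|h].
  by exists j; rewrite eqxx.
case: (mu1 u j) => //=.
apply/negbTE; apply/negP => /and3P[/existsP[w1 /andP[/eqP e1 /eqP e2]] /existsP[w2 /andP[/eqP e3 /eqP e4]] _].
have [hA hA'] := A0_val h1 h2 h3.
move: e4; rewrite B0_val // => e4; lia.
Qed.
Local Close Scope ring_scope.

Definition Q n q r t x : 'I_n -> bool := iter t (Fs q r) (fun w : 'I_n => val w == x).
Arguments Q : clear implicits.

Lemma Q_shift n q r t x : (1 <= r)%N -> (r < n)%N -> (q + 3 <= n)%N ->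
  (x + 3 <= n)%N -> Q n q r t.+1 x =1 Q n q r t x.+1.
Proof.
move=> h1 h2 h3 hx; rewrite /Q iterSr; apply: iter_ext => u.
rewrite Fs_single //; last by lia.
have e1 : (x == n - 2)%N = false by apply/eqP; lia.
have e2 : (x == n - 1)%N = false by apply/eqP; lia.
by rewrite e1 e2.
Qed.

Lemma Q_chain n q r d t : (1 <= r)%N -> (r < n)%N -> (q + 3 <= n)%N ->
  (d <= n - 2)%N -> Q n q r (d + t) (n - 2 - d) =1 Q n q r t (n - 2).
Proof.
move=> h1 h2 h3; elim: d => [|d IH] hd u; first by rewrite subn0.
rewrite addSn Q_shift //; last by lia.
rewrite (_ : (n - 2 - d.+1).+1 = n - 2 - d)%N; last by lia.
by apply: IH; lia.
Qed.

Lemma Q_nm2 n q r t : (1 <= r)%N -> (r < n)%N -> (q + 3 <= n)%N ->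
  Q n q r t.+1 (n - 2) =1 iter t (Fs q r) (fun w : 'I_n => arcp n 0 0 (val w)).
Proof.
move=> h1 h2 h3; rewrite /Q iterSr; apply: iter_ext => u.
by rewrite Fs_single // ?eqxx //; lia.
Qed.

Lemma Q_nm1 n q r t : (1 <= r)%N -> (r < n)%N -> (q + 3 <= n)%N ->
  Q n q r t.+1 (n - 1) =1 Q n q r t 0.
Proof.
move=> h1 h2 h3; rewrite /Q iterSr; apply: iter_ext => u.
have e1 : (n - 1 == n - 2)%N = false by apply/eqP; lia.
by rewrite Fs_single // ?e1 ?eqxx //; lia.
Qed.

Lemma traj n q r s : (1 <= r)%N -> (r < n)%N -> (q + 3 <= n)%N ->
  (s <= (n - 1) * q + r - 1)%N ->
  exists c e, [/\ (c * (n - 1) + e = s)%N, (e <= n - 2)%N &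
     iter s (Fs q r) (fun w : 'I_n => arcp n 0 0 (val w)) =1 (fun w => arcp n c e (val w))].
Proof.
move=> h1 h2 h3; elim: s => [|s IH] hs.
  by exists 0%N, 0%N; split.
have [c [e [hce he hit]]] := IH (ltnW hs).
have hc : (c < q \/ (c = q /\ e < r - 1))%N.
  case: (ltnP c q) => hcq; first by left.
  right; case: (ltnP q c) => hqc.
    have : ((q.+1) * (n - 1) <= c * (n - 1))%N by apply: leq_mul.
    nia.
  have cq : c = q by apply/eqP; rewrite eqn_leq hcq hqc.
  subst c; split => //; nia.
case: (boolP (e == n - 2)%N) => /eqP hE.
  exists c.+1, 0%N; split.
  - rewrite mulSn; lia.
  - lia.
  - move=> u /=; rewrite (Fs_ext q r hit) arc_step //.
    by rewrite ifT //; apply/eqP.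
exists c, e.+1; split.
- lia.
- lia.
- move=> u /=; rewrite (Fs_ext q r hit) arc_step //.
  by rewrite ifF //; apply/eqP.
Qed.

Lemma traj_end n q r : (1 <= r)%N -> (r < n)%N -> (q + 3 <= n)%N ->
  iter ((n - 1) * q + r - 1) (Fs q r) (fun w : 'I_n => arcp n 0 0 (val w)) =1
  (fun w => arcp n q r.-1 (val w)).
Proof.
move=> h1 h2 h3.
have [c [e [hce he hit]]] := @traj n q r ((n - 1) * q + r - 1) h1 h2 h3 (leqnn _).
have cq : c = q.
  case: (ltngtP c q) => // hcq.
    have : (c.+1 * (n - 1) <= q * (n - 1))%N by apply: leq_mul.
    nia.
  have : (q.+1 * (n - 1) <= c * (n - 1))%N by apply: leq_mul.
  nia.
subst c; have ee : e = r.-1 by nia.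
by subst e.
Qed.

Lemma Q_full n q r d : (1 <= r)%N -> (r < n)%N -> (q + 3 <= n)%N -> (d <= n - 2)%N ->
  forall u, Q n q r (d + ((n - 1) * q + r).+1) (n - 2 - d) u.
Proof.
move=> h1 h2 h3 hd u; rewrite Q_chain // Q_nm2 //.
rewrite (_ : ((n - 1) * q + r = ((n - 1) * q + r - 1).+1)%N); last by nia.
rewrite iterS (Fs_ext q r (traj_end h1 h2 h3)); exact: arc_final.
Qed.

Lemma Q_notfull n q r d (hr : (r < n)%N) : (1 <= r)%N -> (q + 3 <= n)%N -> (d <= n - 2)%N ->
  Q n q r (d + ((n - 1) * q + r)) (n - 2 - d) (Ordinal hr) = false.
Proof.
move=> h1 h3 hd; rewrite Q_chain // .
rewrite (_ : ((n - 1) * q + r = ((n - 1) * q + r - 1).+1)%N); last by nia.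
rewrite Q_nm2 // traj_end //= (_ : r = (r.-1).+1); last by lia.
by rewrite arc_notfull //; lia.
Qed.

Lemma P_iter (R : numDomainType) n q r m' t (j u : 'I_n) :
  (1 <= r)%N -> (r < n)%N -> (q + 3 <= n)%N ->
  (0 < majo_pow m'.+3 (@Atens R n q r) t.+1 u j)%R = Q n q r t.+1 (val j) u.
Proof.
move=> h1 h2 h3; elim: t u => [|t IH] u.
  rewrite majo_pow1 /Q /= Fs_single_mu //.
  by rewrite /Atens /= eqxx /= ltr0n lt0b.
have hAB : A0 n q r != B0 n r.
  have [hA hA'] := A0_val h1 h2 h3; rewrite B0_val //; apply/eqP; lia.
have E1 := @majo_powS_pos R n m'.+3 (@Atens R n q r) t u j (@Atens_ge0 R n q r).
have E2 := @Fstep R n q r m' u (Q n q r t.+1 (val j)) hAB.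
rewrite (_ : Q n q r t.+2 (val j) u = Fs q r (Q n q r t.+1 (val j)) u) //.
apply/idP/idP => H.
  apply/E2; have [tp [ht hl]] := proj1 E1 H.
  by exists tp; split => // l; rewrite -IH.
apply/E1; have [tp [ht hl]] := proj2 E2 H.
by exists tp; split => // l; rewrite IH.
Qed.

Lemma jdeg (R : numDomainType) n q r m' (j : 'I_n) g (hr : (r < n)%N) :
  (1 <= r)%N -> (q + 3 <= n)%N -> (2 <= g)%N ->
  (forall u, Q n q r g (val j) u) -> Q n q r g.-1 (val j) (Ordinal hr) = false ->
  jprim_degree m'.+3 (@Atens R n q r) j g.
Proof.
move=> h1 h3 hg Hf Hn; split; first by lia.
  move=> u; rewrite (_ : g = g.-1.+1); last by lia.
  rewrite (@P_iter R n q r m' g.-1 j u h1 hr h3) prednK //; lia.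
move=> k' hk' Hk; rewrite leqNgt; apply/negP => hlt.
have Hq : forall u, Q n q r k' (val j) u.
  move=> u; rewrite (_ : k' = k'.-1.+1); last by lia.
  rewrite -(@P_iter R n q r m' k'.-1 j u h1 hr h3) prednK //; exact: Hk.
have := iter_full h1 hr h3 Hq (g.-1 - k') (Ordinal hr).
rewrite subnK; last by lia.
by rewrite -/(Q n q r g.-1 (val j)) Hn.
Qed.

Theorem theorem3p3 (R : realType) (m n k q r : nat) :
  (3 <= m)%N -> (1 <= k)%N -> (k + 3 * n <= n ^ 2 + 2)%N ->
  k = ((n - 1) * q + r)%N -> (1 <= r)%N -> (r <= n - 1)%N ->
  [/\ (forall j : 'I_n, (j.+1 <= n - 1)%N ->
          jprim_degree m (@Atens R n q r) j (k + n - j.+1)),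
      (forall j : 'I_n, j.+1 = n -> jprim_degree m (@Atens R n q r) j (k + n)) &
      prim_degree m (@Atens R n q r) (k + n)].
Proof.
move=> hm hk hkn hkd h1 hrn.
have hr : (r < n)%N by lia.
have h3 : (q + 3 <= n)%N by move: hkn; rewrite hkd => hkn; clear -hkn h1 hrn; nia.
case: m hm => [|[|[|m']]] // _.
have QF : forall d, (d <= n - 2)%N -> forall u, Q n q r (d + k.+1) (n - 2 - d) u.
  by move=> d hd u; rewrite hkd; apply: Q_full.
have QN : forall d, (d <= n - 2)%N -> Q n q r (d + k) (n - 2 - d) (Ordinal hr) = false.
  by move=> d hd; rewrite hkd; apply: Q_notfull.
have P1 : forall j : 'I_n, (j.+1 <= n - 1)%N ->
          jprim_degree m'.+3 (@Atens R n q r) j (k + n - j.+1).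
  move=> j hj; have hv : nat_of_ord j = val j := erefl.
  have hj' : ((val j).+1 <= n - 1)%N := hj.
  have ej : val j = (n - 2 - (n - 2 - val j))%N by lia.
  apply: (@jdeg R n q r m' j _ hr) => //; first by lia.
    move=> u; rewrite ej (_ : k + n - j.+1 = (n - 2 - val j) + k.+1)%N; last by lia.
    by apply: QF; lia.
  rewrite ej (_ : (k + n - j.+1).-1 = (n - 2 - val j) + k)%N; last by lia.
  by apply: QN; lia.
have P2 : forall j : 'I_n, j.+1 = n -> jprim_degree m'.+3 (@Atens R n q r) j (k + n).
  move=> j hj; have hv : nat_of_ord j = val j := erefl.
  have hj' : (val j).+1 = n := hj.
  have ej : val j = (n - 1)%N by lia.
  apply: (@jdeg R n q r m' j _ hr) => //; first by lia.
    move=> u; rewrite ej (_ : k + n = (n - 2 + k.+1).+1)%N; last by lia.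
    rewrite Q_nm1 //.
    have -> : Q n q r (n - 2 + k.+1) 0 = Q n q r (n - 2 + k.+1) (n - 2 - (n - 2)) by rewrite subnn.
    by apply: QF.
  rewrite ej (_ : (k + n).-1 = (n - 2 + k).+1)%N; last by lia.
  rewrite Q_nm1 //.
  have -> : Q n q r (n - 2 + k) 0 = Q n q r (n - 2 + k) (n - 2 - (n - 2)) by rewrite subnn.
  by apply: QN.
have jmax : (n - 1 < n)%N by lia.
split => //; split; first by lia.
  move=> u j; case: (ltnP j.+1 n) => hj.
    have [hg Hg _] := P1 j (ltac:(lia)).
    have Hq : forall u, Q n q r (k + n - j.+1) (val j) u.
      move=> w; rewrite (_ : k + n - j.+1 = (k + n - j.+1).-1.+1)%N; last by lia.
      rewrite -(@P_iter R n q r m' _ j w h1 hr h3) prednK //; exact: Hg.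
    have := iter_full h1 hr h3 Hq (j.+1) u.
    rewrite (_ : j.+1 + (k + n - j.+1) = (k + n).-1.+1)%N; last by lia.
    by rewrite -/(Q n q r _ (val j)) -(@P_iter R n q r m' _ j u h1 hr h3) prednK //; lia.
  have [_ Hg _] := P2 j (ltac:(have := ltn_ord j; lia)).
  exact: Hg.
move=> k' hk' Hk.
have [_ _ Hm] := P2 (Ordinal jmax) (ltac:(rewrite /=; lia)).
by apply: Hm => // u; apply: Hk.
Qed.
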